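(* Let $Q\subset\mathbb{R}^2$ be a convex polygon with $n\ge 4$ vertices, no four of which lie on a common circle. Consider all circles passing through three vertices of $Q$. Let $s_+,t_+,u_+$ be the numbers of full circles that are neighboring, disjoint and intermediate, respectively, and let $s_-,t_-,u_-$ be the numbers of empty circles that are neighboring, disjoint and intermediate, respectively. Then $$s_+-t_+=s_--t_-=2,\qquad s_++t_++u_+=s_-+t_-+u_-=n-2.$$
   Context: A circle through three vertices of $Q$ is called empty if all remaining vertices of $Q$ lie strictly outside it, and full if all remaining vertices of $Q$ lie strictly inside it. Such a circle is called neighboring if its three vertices are consecutive vertices of $Q$; disjoint if no two of its three vertices are adjacent vertices of $Q$; and intermediate in all other cases. *)

(* Defs.v *)
From HB Require Import structures.
From mathcomp Require Import all_boot all_order all_algebra.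
From mathcomp Require Import boolp.
Set Implicit Arguments. Unset Strict Implicit. Unset Printing Implicit Defensive.
Import Order.TTheory GRing.Theory Num.Theory.
Local Open Scope ring_scope.

Definition pt (R : realFieldType) := (R * R)%type.

Definition d2 (R : realFieldType) (a b : pt R) : R :=
  (a.1 - b.1) ^+ 2 + (a.2 - b.2) ^+ 2.

Definition orient (R : realFieldType) (a b c : pt R) : R :=
  (b.1 - a.1) * (c.2 - a.2) - (b.2 - a.2) * (c.1 - a.1).

Definition nxt (n : nat) (i : 'I_n) : nat := (i.+1 %% n)%N.

Definition succ_ord (n : nat) (i : 'I_n) : 'I_n :=
  Ordinal (ltn_pmod i.+1 (leq_ltn_trans (leq0n i) (ltn_ord i))).

(* p : 'I_n -> R^2 lists the vertices of a convex polygon in cyclic order: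
   for every edge p_i p_(i+1), all other vertices lie strictly on the same
   side of the line through it (all counterclockwise or all clockwise). *)
Definition convex_polygon (R : realFieldType) (n : nat) (p : 'I_n -> pt R) : Prop :=
  (forall i j : 'I_n, (j : nat) != i -> (j : nat) != nxt i ->
     0 < orient (p i) (p (succ_ord i)) (p j)) \/
  (forall i j : 'I_n, (j : nat) != i -> (j : nat) != nxt i ->
     orient (p i) (p (succ_ord i)) (p j) < 0).

Definition no_four_concyclic (R : realFieldType) (n : nat) (p : 'I_n -> pt R) : Prop :=
  forall (A : {set 'I_n}) (c : pt R) (r : R), #|A| = 4%N ->
    ~ (forall i, i \in A -> d2 (p i) c = r).

Definition full_circle (R : realFieldType) (n : nat) (p : 'I_n -> pt R)
  (A : {set 'I_n}) : Prop :=
  exists (c : pt R) (r : R), (forall i, i \in A -> d2 (p i) c = r) /\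
    (forall j, j \notin A -> d2 (p j) c < r).

Definition empty_circle (R : realFieldType) (n : nat) (p : 'I_n -> pt R)
  (A : {set 'I_n}) : Prop :=
  exists (c : pt R) (r : R), (forall i, i \in A -> d2 (p i) c = r) /\
    (forall j, j \notin A -> r < d2 (p j) c).

Definition adjacent (n : nat) (i j : 'I_n) : bool :=
  ((j : nat) == nxt i) || ((i : nat) == nxt j).

Definition neighboring (n : nat) (A : {set 'I_n}) : bool :=
  [exists i : 'I_n, A == [set j : 'I_n | (j : nat) \in
      [:: (i : nat); (i.+1 %% n)%N; (i.+2 %% n)%N]]].

Definition disjoint3 (n : nat) (A : {set 'I_n}) : bool :=
  [forall i in A, forall j in A, ~~ adjacent i j].

Definition intermediate (n : nat) (A : {set 'I_n}) : bool :=
  ~~ neighboring A && ~~ disjoint3 A.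

Definition count_full (R : realFieldType) (n : nat) (p : 'I_n -> pt R)
  (K : {set 'I_n} -> bool) : nat :=
  #|[set A : {set 'I_n} | [&& #|A| == 3%N, K A & `[< full_circle p A >]]]|.

Definition count_empty (R : realFieldType) (n : nat) (p : 'I_n -> pt R)
  (K : {set 'I_n} -> bool) : nat :=
  #|[set A : {set 'I_n} | [&& #|A| == 3%N, K A & `[< empty_circle p A >]]]|.

(* Main.v *)
Require Import Defs.
From HB Require Import structures.
From mathcomp Require Import all_boot all_order all_algebra.
From mathcomp Require Import boolp.
From mathcomp Require Import ring lra zify.
Set Implicit Arguments. Unset Strict Implicit. Unset Printing Implicit Defensive.
Import Order.TTheory GRing.Theory Num.Theory.
Local Open Scope ring_scope.
Section SetLemmas.
Variable T : finType.
Implicit Types (a b c d : T) (A : {set T}).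

Lemma set3E a b c x : (x \in [set a; b; c]) = [|| x == a, x == b | x == c].
Proof. by rewrite !inE orbA. Qed.

Lemma card3 a b c : a != b -> a != c -> b != c -> #|[set a; b; c]| = 3%N.
Proof.
move=> hab hac hbc.
rewrite setUC cardsU1 cardsU1 cards1 !inE.
by rewrite (negbTE hab) eq_sym (negbTE hac) eq_sym (negbTE hbc).
Qed.

Lemma set3_sub A a b c : a \in A -> b \in A -> c \in A ->
  a != b -> a != c -> b != c -> #|A| = 3%N -> A = [set a; b; c].
Proof.
move=> ha hb hc hab hac hbc hA.
apply/eqP; rewrite eq_sym eqEcard hA card3 // leqnn andbT.
by apply/subsetP => x; rewrite set3E => /or3P [] /eqP ->.
Qed.

Lemma set3_of A a b : #|A| = 3%N -> a \in A -> b \in A -> a != b ->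
  exists c, [/\ c != a, c != b & A = [set a; b; c]].
Proof.
move=> hA ha hb hab.
have h1 : #|A :\ a :\ b| = 1%N.
  move: hA; rewrite (cardsD1 a A) ha (cardsD1 b (A :\ a)) !inE eq_sym hab hb /=.
  by case.
have [c hc] : exists c, A :\ a :\ b = [set c] by apply/cards1P; rewrite h1.
have : c \in A :\ a :\ b by rewrite hc set11.
rewrite !inE => /and3P [hcb hca hcA].
by exists c; split => //; apply: set3_sub; rewrite // eq_sym.
Qed.

Lemma card3_ex A : #|A| = 3%N ->
  exists a b c, [/\ a != b, a != c, b != c & A = [set a; b; c]].
Proof.
move=> hA.
have [a ha] : exists a, a \in A by apply/card_gt0P; rewrite hA.
have h2 : #|A :\ a| = 2%N by move: hA; rewrite (cardsD1 a A) ha; case.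
have [b hb] : exists b, b \in A :\ a by apply/card_gt0P; rewrite h2.
move: (hb); rewrite !inE => /andP [hba hbA].
have [c [hca hcb ->]] := set3_of hA ha hbA ltac:(by rewrite eq_sym).
by exists a, b, c; split; rewrite // eq_sym.
Qed.

Lemma card4 A a b c d : a \in A -> b \in A -> c \in A -> d \in A ->
  a != b -> a != c -> a != d -> b != c -> b != d -> c != d -> (4 <= #|A|)%N.
Proof.
move=> ha hb hc hd hab hac had hbc hbd hcd.
have -> : 4%N = #|d |: [set a; b; c]|.
  rewrite cardsU1 card3 // set3E.
  by rewrite eq_sym (negbTE had) eq_sym (negbTE hbd) eq_sym (negbTE hcd).
apply: subset_leq_card; apply/subsetP => x; rewrite !inE -orbA.
by case/or4P => /eqP ->.
Qed.

Lemma sumb_card (P : pred T) : (\sum_(y : T) (P y : nat) = #|P|)%N.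
Proof.
rewrite -sum1_card [RHS]big_mkcond /=; apply: eq_bigr => y _.
by rewrite unfold_in; case: (P y).
Qed.

End SetLemmas.

Lemma sum_in_card (T : finType) (A : {set T}) (P : pred T) :
  (\sum_(x in A) (P x : nat))%N = #|[set x in A | P x]|.
Proof.
have -> : #|[set x in A | P x]| = (\sum_x ((x \in [set x in A | P x]) : nat))%N.
  by rewrite (sumb_card (fun x => x \in [set x in A | P x])); apply: eq_card.
rewrite big_mkcond; apply: eq_bigr => x _; rewrite inE.
by case: (x \in A).
Qed.
Section Alg.
Variable R : realFieldType.

Definition aff (al be ga : R) (x : pt R) := al * x.1 + be * x.2 + ga.

Definition Wf (pa pb pc pv : pt R) (za zb zc zv : R) :=
  orient pb pc pv * za - orient pa pc pv * zb + orient pa pb pv * zc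
  - orient pa pb pc * zv.

Lemma interp pa pb pc za zb zc : orient pa pb pc != 0 ->
  exists al be ga, [/\ aff al be ga pa = za, aff al be ga pb = zb &
                       aff al be ga pc = zc].
Proof.
move=> hD.
exists (((pb.2 - pc.2) * za + (pc.2 - pa.2) * zb + (pa.2 - pb.2) * zc) / orient pa pb pc).
exists (((pc.1 - pb.1) * za + (pa.1 - pc.1) * zb + (pb.1 - pa.1) * zc) / orient pa pb pc).
exists (((pb.1 * pc.2 - pb.2 * pc.1) * za + (pc.1 * pa.2 - pc.2 * pa.1) * zb
   + (pa.1 * pb.2 - pa.2 * pb.1) * zc) / orient pa pb pc).
move: hD; rewrite /aff /orient => hD; split; field=> //.
Qed.

Lemma trans_id (o e u v w : pt R) :
  orient o u w * orient o e v =
  orient o u v * orient o e w + orient o v w * orient o e u.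
Proof. rewrite /orient; ring. Qed.

End Alg.
Section Pencil.
Variables (R : realFieldType) (T : finType) (V : pred T) (D mu : T -> R).
Hypothesis hD : forall w, V w -> D w != 0.
Hypothesis hmu : {in V &, injective mu}.

Definition goodb y :=
  V y && [forall w, (V w && (w != y)) ==> (0 < D w * (mu y - mu w))].

Lemma goodP y : reflect (V y /\ forall w, V w -> w != y -> 0 < D w * (mu y - mu w))
  (goodb y).
Proof.
apply: (iffP andP) => [[hy /forallP h] | [hy h]]; split => //.
  by move=> w hw hne; move/implyP: (h w); apply; rewrite hw hne.
by apply/forallP => w; apply/implyP => /andP [] /h; apply.
Qed.

Lemma good_uniq y y' : goodb y -> goodb y' -> 0 < D y -> 0 < D y' -> y = y'.
Proof.
move=> /goodP [hy hg] /goodP [hy' hg'] hDy hDy'.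
apply/eqP; apply/negP => /negP hne.
have h1 := hg y' hy' ltac:(by rewrite eq_sym).
have h2 := hg' y hy hne.
nra.
Qed.

Lemma good_exists : (exists y, V y && (0 < D y)) ->
  ((forall w, V w -> 0 < D w) \/ (exists y, goodb y && (D y < 0))) ->
  exists y, goodb y && (0 < D y).
Proof.
move=> [i0 hi0] hcase.
have [ym /andP [hVm hDm] hmax] := @real_arg_maxP R T i0 (fun i => V i && (0 < D i)) mu hi0
  (fun i _ => num_real (mu i)).
exists ym; rewrite hDm andbT; apply/goodP; split => // w hw hne.
have hmuw : mu w != mu ym.
  by apply: contra hne => /eqP e; apply/eqP; apply: hmu.
have := hD hw; rewrite neq_lt => /orP [hneg | hpos]; last first.
  have := hmax w; rewrite hw hpos /= => /(_ isT) hle.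
  have hlt : mu w < mu ym by rewrite lt_neqAle hmuw hle.
  nra.
case: hcase => [hall | [y0 /andP [/goodP [hy0 hg0] hD0]]].
  by have := hall w hw; lra.
have hy0m : ym != y0 by apply/eqP => e; move: hDm; rewrite e; lra.
have h1 := hg0 ym hVm hy0m.
have [e | ne] := eqVneq w y0.
  rewrite e; nra.
have h2 := hg0 w hw ne.
nra.
Qed.

Lemma good_card_edge : (forall w, V w -> 0 < D w) -> (exists y, V y) ->
  #|[pred y | goodb y]| = 1%N.
Proof.
move=> hall [y0 hy0].
have [|y /andP [hy hDy]] := good_exists _ (or_introl hall).
  by exists y0; rewrite hy0 hall.
apply: (@eq_card1 _ y) => w; rewrite !inE.
apply/idP/eqP => [hw | ->] //.
apply: good_uniq => //; apply: hall; by case/andP: hw.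
Qed.

End Pencil.

Lemma goodbN (R : realFieldType) (T : finType) (V : pred T) (D mu : T -> R) y :
  goodb V (fun w => - D w) (fun w => - mu w) y = goodb V D mu y.
Proof.
rewrite /goodb; congr (_ && _); apply: eq_forallb => w.
by congr (_ ==> _); congr (0 < _); ring.
Qed.

Lemma good_bal (R : realFieldType) (T : finType) (V : pred T) (D mu : T -> R) :
  (forall w, V w -> D w != 0) -> {in V &, injective mu} ->
  (exists y, V y && (0 < D y)) -> (exists y, V y && (D y < 0)) ->
  #|[pred y | goodb V D mu y && (0 < D y)]| = #|[pred y | goodb V D mu y && (D y < 0)]|.
Proof.
move=> hD hmu hp hm.
have hD' : forall w, V w -> - D w != 0 by move=> w /hD; rewrite oppr_eq0.
have hmu' : {in V &, injective (fun w => - mu w)}.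
  by move=> x y hx hy /= /eqP; rewrite eqr_opp => /eqP; apply: hmu.
have uniqN : forall y y', goodb V D mu y -> goodb V D mu y' -> D y < 0 -> D y' < 0 -> y = y'.
  move=> y y' g g' d d'; apply: (@good_uniq _ _ V (fun w => - D w) (fun w => - mu w));
    rewrite ?goodbN // oppr_gt0 //.
have uniqP : forall y y', goodb V D mu y -> goodb V D mu y' -> 0 < D y -> 0 < D y' -> y = y'.
  by move=> y y' g g' d d'; apply: (@good_uniq _ _ V D mu).
have [[y1 /andP [g1 d1]] | nop] := pselect (exists y, goodb V D mu y && (0 < D y)).
  have [y2 /andP [g2 d2]] : exists y, goodb V D mu y && (D y < 0).
    have e1 : exists y, V y && (0 < - D y).
      by case: hm => y /andP [hy hDy]; exists y; rewrite hy oppr_gt0.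
    have e2 : (forall w, V w -> 0 < - D w) \/
        (exists y, goodb V (fun w => - D w) (fun w => - mu w) y && (- D y < 0)).
      by right; exists y1; rewrite goodbN g1 /= oppr_lt0.
    have [y2 /andP [g2 d2]] := @good_exists R T V (fun w => - D w) (fun w => - mu w) hD' hmu' e1 e2.
    by exists y2; rewrite -(goodbN V D mu) g2 /= -oppr_gt0.
  rewrite (@eq_card1 _ y1) ?(@eq_card1 _ y2) // => w; rewrite !inE;
    apply/idP/eqP => [/andP [gw dw] | ->]; rewrite ?g1 ?d1 ?g2 ?d2 //.
    by apply: uniqN.
  by apply: uniqP.
have nom : ~ exists y, goodb V D mu y && (D y < 0).
  move=> hex; apply: nop; apply: good_exists => //; by right.
rewrite !eq_card0 // => w; rewrite !inE; apply/negP => /andP [g d].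
  by apply: nom; exists w; rewrite g d.
by apply: nop; exists w; rewrite g d.
Qed.
Lemma sqr_pos (R : realFieldType) (x : R) : x != 0 -> 0 < x * x.
Proof. by case: (ltgtP x 0) => h //= _; nra. Qed.

Lemma val_succ n (i : 'I_n) : nat_of_ord (succ_ord i) = if (i.+1 < n)%N then i.+1 else 0%N.
Proof.
rewrite /succ_ord /=; case: ltnP => h; first by rewrite modn_small.
have -> : i.+1 = n by apply/eqP; rewrite eqn_leq h ltn_ord.
by rewrite modnn.
Qed.

Section Poly.
Variables (R : realFieldType) (n : nat) (p : 'I_n -> pt R) (eps : R) (z : 'I_n -> R).
Hypothesis heps : eps = 1 \/ eps = -1.
Hypothesis hn : (3 <= n)%N.

Definition Dl i k m := eps * orient (p i) (p k) (p m).
Definition Wz i k m v := eps * Wf (p i) (p k) (p m) (p v) (z i) (z k) (z m) (z v).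
Definition circ (A : {set 'I_n}) : Prop := exists al be ga,
  (forall i, i \in A -> aff al be ga (p i) = z i) /\
  (forall j, j \notin A -> z j < aff al be ga (p j)).

Lemma Wz_aff a b c v al be ga : aff al be ga (p a) = z a ->
  aff al be ga (p b) = z b -> aff al be ga (p c) = z c ->
  Wz a b c v = - Dl a b c * (z v - aff al be ga (p v)).
Proof. by move=> ha hb hc; rewrite /Wz /Wf -ha -hb -hc /Dl /aff /orient; ring. Qed.

Lemma Dl_orient a b c : Dl a b c != 0 -> orient (p a) (p b) (p c) != 0.
Proof. by apply: contra => /eqP h; rewrite /Dl h mulr0. Qed.

Lemma circ3 a b c : Dl a b c != 0 ->
  circ [set a; b; c] <-> forall v, v \notin [set a; b; c] -> 0 < Wz a b c v * Dl a b c.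
Proof.
move=> hD; split.
  move=> [al [be [ga [hA hN]]]] v hv.
  rewrite (@Wz_aff _ _ _ _ al be ga); try by apply: hA; rewrite !inE eqxx ?orbT.
  have h := hN v hv.
  have -> : - Dl a b c * (z v - aff al be ga (p v)) * Dl a b c =
     (Dl a b c * Dl a b c) * (aff al be ga (p v) - z v) by ring.
  by apply: mulr_gt0; [exact: sqr_pos | rewrite subr_gt0].
move=> H.
have [al [be [ga [ha hb hc]]]] := interp (z a) (z b) (z c) (Dl_orient hD).
exists al, be, ga; split.
  by move=> i; rewrite !inE => /orP [/orP [] | ] /eqP ->.
move=> j hj; have := H j hj.
rewrite (@Wz_aff _ _ _ _ al be ga) //.
have -> : - Dl a b c * (z j - aff al be ga (p j)) * Dl a b c =
     (Dl a b c * Dl a b c) * (aff al be ga (p j) - z j) by ring.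
by rewrite pmulr_rgt0 ?sqr_pos // subr_gt0.
Qed.

Lemma Dl_rot i k m : Dl i k m = Dl k m i.
Proof. by rewrite /Dl /orient; ring. Qed.
Lemma Dl_swap i k m : Dl k i m = - Dl i k m.
Proof. by rewrite /Dl /orient; ring. Qed.
Lemma Dl_swap2 i k m : Dl i m k = - Dl i k m.
Proof. by rewrite /Dl /orient; ring. Qed.
Lemma Dl_eq12 i m : Dl i i m = 0.
Proof. by rewrite /Dl /orient; ring. Qed.
Lemma Dl_eq13 i m : Dl i m i = 0.
Proof. by rewrite /Dl /orient; ring. Qed.
Lemma Dl_eq23 i m : Dl m i i = 0.
Proof. by rewrite /Dl /orient; ring. Qed.

Lemma Dl_trans o e u v w : 0 < Dl o e u -> 0 < Dl o e v -> 0 < Dl o e w ->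
  0 < Dl o u v -> 0 < Dl o v w -> 0 < Dl o u w.
Proof.
move=> h1 h2 h3 h4 h5.
have hid : Dl o u w * Dl o e v = Dl o u v * Dl o e w + Dl o v w * Dl o e u.
  rewrite /Dl.
  have -> : forall a b : R, eps * a * (eps * b) = (eps * eps) * (a * b) by move=> *; ring.
  by rewrite trans_id; ring.
have : 0 < Dl o u w * Dl o e v by rewrite hid addr_gt0 // mulr_gt0.
by rewrite pmulr_lgt0.
Qed.

Hypothesis hconv : forall i w : 'I_n, w != i -> w != succ_ord i ->
  0 < Dl i (succ_ord i) w.

Lemma succ_val (k : 'I_n) (m : 'I_n) : nat_of_ord m = k.+1 -> m = succ_ord k.
Proof. by move=> h; apply: ord_inj; rewrite val_succ -h ltn_ord. Qed.

Lemma hconv' (i w : 'I_n) : (w : nat) != i ->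
  (w : nat) != (if (i.+1 < n)%N then i.+1 else 0%N) -> 0 < Dl i (succ_ord i) w.
Proof.
move=> h1 h2; apply: hconv; apply/eqP => e.
  by move/eqP: h1; rewrite e.
by move/eqP: h2; rewrite e val_succ.
Qed.

Lemma cyc (i k m : 'I_n) : (i < k)%N -> (k < m)%N -> 0 < Dl i k m.
Proof.
move=> hik hkm.
have [d hd] : exists d, (m : nat) = (k + d.+1)%N by exists (m - k.+1)%N; lia.
elim: d m hkm hd => [|d IH] m hkm hd.
  have hmn := ltn_ord m.
  have -> : m = succ_ord k by apply: succ_val; lia.
  rewrite Dl_rot; by apply: hconv'; [ | case: ltnP => h]; apply/eqP; lia.
have hmn := ltn_ord m.
have hm'n : (k + d.+1 < n)%N by lia.
set m' : 'I_n := Ordinal hm'n.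
have IHm : 0 < Dl i k m' by apply: IH => //=; lia.
have hm : m = succ_ord m' by apply: succ_val => /=; lia.
have edge : 0 < Dl i m' m.
  rewrite Dl_rot hm; apply: hconv'; rewrite /m' /=; [ | case: ltnP => h]; apply/eqP; lia.
have hsi : nat_of_ord (succ_ord i) = i.+1.
  by rewrite val_succ; have := ltn_ord k; case: ifP => //; lia.
have [ek | nek] := eqVneq (nat_of_ord k) i.+1.
  have -> : k = succ_ord i by apply: succ_val.
  by apply: hconv'; [ | case: ltnP => h]; apply/eqP; lia.
have ne : forall w : 'I_n, (i < w)%N -> nat_of_ord w != i.+1 -> 0 < Dl i (succ_ord i) w.
  move=> w h1 h2; by apply: hconv'; [ | case: ltnP => h]; apply/eqP; lia.
apply: (@Dl_trans i (succ_ord i) k m' m) => //; apply: ne => //=; lia.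
Qed.



Lemma Dl_neq0 (a b c : 'I_n) : a != b -> b != c -> a != c -> Dl a b c != 0.
Proof.
have H : forall x y w : 'I_n, (x < y)%N -> (y < w)%N -> Dl x y w != 0.
  by move=> x y w h1 h2; apply: lt0r_neq0; apply: cyc.
move=> /eqP hab /eqP hbc /eqP hac.
have [h1|h1|h1] := ltngtP a b; have [h2|h2|h2] := ltngtP b c;
  have [h3|h3|h3] := ltngtP a c;
  try (exfalso; lia);
  try (by exfalso; apply: hab; apply: ord_inj);
  try (by exfalso; apply: hbc; apply: ord_inj);
  try (by exfalso; apply: hac; apply: ord_inj).
all: first [ by apply: H; lia
 | by rewrite Dl_swap2 oppr_eq0; apply: H; lia
 | by rewrite Dl_swap oppr_eq0; apply: H; lia
 | by rewrite Dl_rot; apply: H; lia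
 | by rewrite Dl_rot Dl_rot; apply: H; lia
 | by rewrite Dl_swap oppr_eq0 -Dl_rot; apply: H; lia ].
Qed.

Hypothesis hgen : forall a b c v : 'I_n, a != b -> a != c -> a != v ->
  b != c -> b != v -> c != v -> Wz a b c v != 0.

Lemma third (a b : 'I_n) : exists c : 'I_n, (c != a) && (c != b).
Proof.
case: (pickP [pred c : 'I_n | (c != a) && (c != b)]) => [c hc | h].
  by exists c.
exfalso.
have : (#|[set: 'I_n]| <= #|[set a; b]|)%N.
  apply: subset_leq_card; apply/subsetP => c _; move: (h c) => /=.
  by rewrite !inE => /negbT; rewrite negb_and !negbK.
rewrite cardsT card_ord cards2; case: (a != b) => /=; lia.
Qed.

Definition Vab (a b : 'I_n) := [pred w : 'I_n | (w != a) && (w != b)].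

Lemma pencil (a b : 'I_n) : a != b -> exists lam : 'I_n -> R,
  {in Vab a b &, injective lam} /\
  forall y, y \in Vab a b -> (circ [set a; b; y] <-> goodb (Vab a b) (Dl a b) lam y).
Proof.
move=> hab.
have [c0 /andP [hc0a hc0b]] := third a b.
have hD0 : Dl a b c0 != 0 by apply: Dl_neq0; rewrite // eq_sym.
have [al [be [ga [ha hb _]]]] := interp (z a) (z b) (z c0) (Dl_orient hD0).
pose lam x := eps * (z x - aff al be ga (p x)) / orient (p a) (p b) (p x).
have hDV : forall x, x \in Vab a b -> Dl a b x != 0.
  by move=> x; rewrite inE => /andP [h1 h2]; apply: Dl_neq0; rewrite // eq_sym.
have key : forall x y, x \in Vab a b -> y \in Vab a b ->
    Wz a b x y = Dl a b x * Dl a b y * (lam x - lam y).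
  move=> x y hx hy.
  have hox := Dl_orient (hDV x hx); have hoy := Dl_orient (hDV y hy).
  have -> : Wz a b x y = eps * (orient (p a) (p b) (p y) * (z x - aff al be ga (p x))
      - orient (p a) (p b) (p x) * (z y - aff al be ga (p y))).
    by rewrite /Wz /Wf -ha -hb /aff /orient; ring.
  rewrite /Dl /lam.
  by case: heps => ->; field; apply/andP; split.
exists lam; split.
  move=> x y hx hy e; apply/eqP; apply: contraT => hne.
  have := key x y hx hy; rewrite e subrr mulr0 => /eqP.
  move: hx hy; rewrite !inE => /andP [h1 h2] /andP [h3 h4].
  suff : Wz a b x y != 0 by move/negP.
  apply: hgen; by rewrite // eq_sym.
move=> y hy; rewrite circ3; last exact: hDV.
split => [H | /goodP [_ H]].
  apply/goodP; split => // w hw hne.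
  have := H w; rewrite !inE.
  move: (hw); rewrite inE => /andP [/negbTE -> /negbTE ->]; rewrite (negbTE hne) /= => /(_ isT).
  rewrite key //.
  have -> : Dl a b y * Dl a b w * (lam y - lam w) * Dl a b y =
     (Dl a b y * Dl a b y) * (Dl a b w * (lam y - lam w)) by ring.
  by rewrite pmulr_rgt0 // sqr_pos // hDV.
move=> v; rewrite !inE => hv.
have hvV : v \in Vab a b by rewrite inE; move: hv; rewrite !negb_or => /andP [/andP [-> ->] _].
have hvy : v != y by move: hv; rewrite !negb_or => /andP [_ ->].
rewrite key //.
have -> : Dl a b y * Dl a b v * (lam y - lam v) * Dl a b y =
     (Dl a b y * Dl a b y) * (Dl a b v * (lam y - lam v)) by ring.
by rewrite pmulr_rgt0 ?sqr_pos ?hDV //; apply: H.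
Qed.

Definition circb (A : {set 'I_n}) : bool := `[< circ A >].
Definition LS := [set A : {set 'I_n} | (#|A| == 3%N) && circb A].

Lemma succ_neq (i : 'I_n) : succ_ord i != i.
Proof.
apply/eqP => e; move: (congr1 (@nat_of_ord _) e); rewrite val_succ.
case: ltnP => h /=; have := ltn_ord i; lia.
Qed.

Lemma Vab_D (a b : 'I_n) y : a != b -> y \in Vab a b -> Dl a b y != 0.
Proof. by move=> hab; rewrite inE => /andP [h1 h2]; apply: Dl_neq0; rewrite // eq_sym. Qed.

Lemma notVab_D (a b : 'I_n) y : y \notin Vab a b -> Dl a b y = 0.
Proof.
by rewrite inE negb_and !negbK => /orP [] /eqP ->; rewrite ?Dl_eq13 ?Dl_eq23.
Qed.

Lemma edge_count (i : 'I_n) :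
  #|[set A in LS | (i \in A) && (succ_ord i \in A)]| = 1%N.
Proof.
set si := succ_ord i.
have hisi : i != si by rewrite eq_sym succ_neq.
have [lam [hinj hlink]] := pencil hisi.
have hcard := @good_card_edge R _ (Vab i si) (Dl i si) lam
  (fun w => Vab_D hisi) hinj.
have [y0 hy0] : exists y0, [pred y | goodb (Vab i si) (Dl i si) lam y] =i pred1 y0.
  have e1 : forall w, Vab i si w -> 0 < Dl i si w.
    by move=> w; rewrite inE => /andP [h1 h2]; apply: hconv.
  have e2 : exists y, Vab i si y by have [c hc] := third i si; exists c; rewrite inE.
  by have [y0 hy] := mem_card1 (hcard e1 e2); exists y0.
have g0 : goodb (Vab i si) (Dl i si) lam y0 by have := hy0 y0; rewrite !inE eqxx.
have V0 : y0 \in Vab i si by case/andP: g0.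
have := V0; rewrite inE => /andP [h0i h0s].
rewrite (@eq_card1 _ [set i; si; y0]) // => A; rewrite !inE.
apply/idP/eqP => [/andP [/andP [/eqP h3 hc] /andP [hi hsi]] | ->].
  have [c [hci hcsi eA]] := set3_of h3 hi hsi hisi.
  have Vc : c \in Vab i si by rewrite inE hci hcsi.
  move: hc; rewrite /circb eA => /asboolP /(hlink c Vc) gc.
  by have := hy0 c; rewrite !inE gc => /esym /eqP <-.
have h3 : #|[set i; si; y0]| = 3%N by rewrite card3 // eq_sym.
rewrite h3 eqxx /= /circb !set3E !eqxx /= orbT /=.
by rewrite andbT; apply/asboolP; apply/(hlink y0 V0).
Qed.

Lemma set3C a b c : [set a; b; c] = [set a; c; b] :> {set 'I_n}.
Proof. by apply/setP => w; rewrite !set3E; congr (_ || _); rewrite orbC. Qed.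

Definition Ij (j x y : 'I_n) : bool := (0 < Dl j x y) && circb [set j; x; y].

Lemma Ij_good (j x : 'I_n) (lam : 'I_n -> R) : x != j ->
  (forall y, y \in Vab j x -> (circ [set j; x; y] <-> goodb (Vab j x) (Dl j x) lam y)) ->
  forall y, Ij j x y = goodb (Vab j x) (Dl j x) lam y && (0 < Dl j x y) /\
            Ij j y x = goodb (Vab j x) (Dl j x) lam y && (Dl j x y < 0).
Proof.
move=> hxj hlink y.
rewrite /Ij (Dl_swap2 j x y) oppr_gt0 (set3C j y x).
case: (boolP (y \in Vab j x)) => hy.
  have e : circb [set j; x; y] = goodb (Vab j x) (Dl j x) lam y.
    by apply/idP/idP => [/asboolP/(hlink y hy) | /(hlink y hy)/asboolP].
  by rewrite e !(andbC _ (goodb _ _ _ _)); split.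
have e : goodb (Vab j x) (Dl j x) lam y = false.
  by apply/negbTE; move: hy; apply: contra => /andP [].
by rewrite (notVab_D hy) ltxx e andbF; split.
Qed.

Section Vertex.
Variable j : 'I_n.
Hypothesis hj0 : (0 < j)%N.
Hypothesis hj1 : (j.+1 < n)%N.

Lemma jp1_val : nat_of_ord (succ_ord j) = j.+1.
Proof. by rewrite val_succ hj1. Qed.

Lemma up_jp1 : (\sum_y Ij j (succ_ord j) y)%N = 1%N.
Proof.
set s := succ_ord j.
have hsj : s != j by apply: succ_neq.
have hjs : j != s by rewrite eq_sym.
have [lam [hinj hlink]] := pencil hjs.
have e1 : forall w, Vab j s w -> 0 < Dl j s w.
  by move=> w; rewrite inE => /andP [h1 h2]; apply: hconv.
have e2 : exists y, Vab j s y by have [c hc] := third j s; exists c; rewrite inE.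
rewrite sumb_card -(@good_card_edge R _ (Vab j s) (Dl j s) lam (fun w => Vab_D hjs) hinj e1 e2).
apply: eq_card => y; rewrite unfold_in !inE -/(Ij j s y).
have [-> _] := Ij_good hsj hlink y.
case: (boolP (goodb _ _ _ y)) => //= /andP [hy _]; exact: e1.
Qed.

Lemma down_jp1 : (\sum_y Ij j y (succ_ord j))%N = 0%N.
Proof.
set s := succ_ord j.
have hsj : s != j by apply: succ_neq.
have hjs : j != s by rewrite eq_sym.
have [lam [hinj hlink]] := pencil hjs.
rewrite big1 // => y _.
have [_ ->] := Ij_good hsj hlink y.
case: (boolP (goodb _ _ _ y)) => //= /andP [hy _].
have : 0 < Dl j s y by move: hy; rewrite inE => /andP [h1 h2]; apply: hconv.
by move=> h; rewrite ltNge ltW.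
Qed.

Lemma up_down (x : 'I_n) : (j < x)%N -> x != succ_ord j ->
  (\sum_y Ij j x y)%N = (\sum_y Ij j y x)%N.
Proof.
move=> hjx hxs.
have hxj : x != j by apply/eqP => e; move: hjx; rewrite e ltnn.
have hjx' : j != x by rewrite eq_sym.
have [lam [hinj hlink]] := pencil hjx'.
have -> : (\sum_y Ij j x y)%N = #|[pred y | goodb (Vab j x) (Dl j x) lam y && (0 < Dl j x y)]|.
  by rewrite -sumb_card; apply: eq_bigr => y _; have [-> _] := Ij_good hxj hlink y.
have -> : (\sum_y Ij j y x)%N = #|[pred y | goodb (Vab j x) (Dl j x) lam y && (Dl j x y < 0)]|.
  by rewrite -sumb_card; apply: eq_bigr => y _; have [_ ->] := Ij_good hxj hlink y.
have hxv : (j.+1 < x)%N.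
  have : nat_of_ord x != j.+1 by apply: contra hxs => /eqP h; apply/eqP; apply: succ_val.
  lia.
apply: good_bal.
- by move=> w; apply: Vab_D.
- exact: hinj.
- have hm : (j.-1 < n)%N by lia.
  exists (Ordinal hm); apply/andP; split.
    rewrite inE; apply/andP; split; apply/eqP => e; move: (congr1 (@nat_of_ord _) e) => /=; lia.
  rewrite -Dl_rot; apply: cyc => /=; lia.
- exists (succ_ord j); apply/andP; split.
    by rewrite inE succ_neq /= eq_sym.
  rewrite Dl_swap2 oppr_lt0; apply: cyc; rewrite jp1_val //.
Qed.

Lemma Ij_cross (x y : 'I_n) : ~~ (j < x)%N -> (j < y)%N -> Ij j x y = false.
Proof.
rewrite -leqNgt leq_eqVlt => /orP [/eqP hx | hx] hy; rewrite /Ij.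
  have -> : x = j by apply: ord_inj.
  by rewrite Dl_eq12 ltxx.
by rewrite (Dl_swap x j y) oppr_gt0 ltNge (ltW (cyc hx hy)).
Qed.

Lemma vertex1 : (\sum_(x : 'I_n | (j < x)%N) \sum_(y : 'I_n | ~~ (j < y)%N) Ij j x y)%N = 1%N.
Proof.
set X := fun x : 'I_n => (j < x)%N.
set S := (\sum_(x : 'I_n | X x) \sum_(y : 'I_n | ~~ X y) Ij j x y)%N.
set A := (\sum_(x : 'I_n | X x) \sum_(y : 'I_n | X y) Ij j x y)%N.
have hup : (\sum_(x : 'I_n | X x) \sum_(y : 'I_n) Ij j x y)%N = (A + S)%N.
  rewrite /A /S -big_split /=; apply: eq_bigr => x _.
  by rewrite (bigID X).
have hdown : (\sum_(x : 'I_n | X x) \sum_(y : 'I_n) Ij j y x)%N = A.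
  rewrite (eq_bigr (fun x => \sum_(y : 'I_n | X y) Ij j y x)%N); last first.
    move=> x hx; rewrite (bigID X) /= [Z in (_ + Z)%N]big1 ?addn0 //.
    by move=> y hy; rewrite Ij_cross.
  by rewrite /A exchange_big.
have hXs : X (succ_ord j) by rewrite /X jp1_val.
have hsplit : (\sum_(x : 'I_n | X x) \sum_(y : 'I_n) Ij j x y)%N = (1 + \sum_(x : 'I_n | X x) \sum_(y : 'I_n) Ij j y x)%N.
  rewrite (bigD1 (succ_ord j)) //= up_jp1 [in RHS](bigD1 (succ_ord j)) //= down_jp1 add0n.
  congr (_ + _)%N; apply: eq_bigr => x /andP [hx hxs]; exact: up_down.
move: hsplit; rewrite hup hdown; lia.
Qed.

End Vertex.

Lemma mem3 (w a b c : 'I_n) : w \in [set a; b; c] ->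
  [\/ (w : nat) = a, (w : nat) = b | (w : nat) = c].
Proof. by rewrite set3E => /or3P [] /eqP ->; [apply: Or31 | apply: Or32 | apply: Or33]. Qed.

Definition Vj (j : 'I_n) : nat :=
  (\sum_(x : 'I_n) \sum_(y : 'I_n) ((j < x)%N && (y < j)%N && circb [set j; x; y]))%N.

Lemma Vj_val (j : 'I_n) : Vj j = if (0 < j)%N && (j.+1 < n)%N then 1%N else 0%N.
Proof.
case: ifP => [/andP [hj0 hj1] | hj].
  rewrite -(vertex1 hj0 hj1) /Vj [RHS]big_mkcond; apply: eq_bigr => x _.
  case: (ltnP j x) => hx /=; last by rewrite big1.
  rewrite [RHS]big_mkcond; apply: eq_bigr => y _.
  case: (ltngtP j y) => hy /=.
  - by [].
  - by rewrite /Ij -(Dl_rot y j x) (cyc hy hx).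
  - have -> : y = j by apply: ord_inj.
    by rewrite /Ij Dl_eq13 ltxx.
rewrite /Vj big1 // => x _; rewrite big1 // => y _.
move: hj; case: (posnP j) => hj0 /= hj.
  by rewrite hj0 ltn0 andbF andFb.
have hjn : (j : nat) = n.-1 by have := ltn_ord j; move: hj; lia.
have := ltn_ord x; rewrite hjn; case: (ltnP n.-1 x) => //=; lia.
Qed.

Lemma sum_Vj : (\sum_(j : 'I_n) Vj j)%N = (n - 2)%N.
Proof.
rewrite (eq_bigr (fun j : 'I_n => (fun k : nat => if (0 < k)%N && (k.+1 < n)%N then 1%N else 0%N) j));
  last by move=> j _; rewrite Vj_val.
rewrite -(big_mkord xpredT (fun k : nat => if (0 < k)%N && (k.+1 < n)%N then 1%N else 0%N)).
have [m hm] : exists m, n = m.+2 by exists (n - 2)%N; lia.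
rewrite hm big_nat_recl // big_nat_recr //= ?ltnn ?andbF ?add0n ?addn0.
rewrite (eq_big_nat _ _ (F2 := fun _ => 1%N)); last by move=> i /andP [_ hi]; case: ltnP => //; lia.
by rewrite sum_nat_const_nat; lia.
Qed.

Lemma sort3 (a b c : 'I_n) : a != b -> a != c -> b != c ->
  exists lo mid hi : 'I_n, [/\ (lo < mid)%N, (mid < hi)%N &
    forall w, w \in [:: lo; mid; hi] -> w \in [:: a; b; c]].
Proof.
move=> /eqP hab /eqP hac /eqP hbc.
have hsub : forall lo mid hi : 'I_n, perm_eq [:: lo; mid; hi] [:: a; b; c] ->
    forall w, w \in [:: lo; mid; hi] -> w \in [:: a; b; c].
  by move=> lo mid hi hp w; rewrite (perm_mem hp).
have [h1|h1|h1] := ltngtP a b; have [h2|h2|h2] := ltngtP b c;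
  have [h3|h3|h3] := ltngtP a c;
  try (exfalso; lia);
  try (by exfalso; apply: hab; apply: ord_inj);
  try (by exfalso; apply: hbc; apply: ord_inj);
  try (by exfalso; apply: hac; apply: ord_inj).
- by exists a, b, c; split => // w; rewrite !inE => /or3P [] /eqP ->; rewrite eqxx ?orbT.
- by exists a, c, b; split => // w; rewrite !inE => /or3P [] /eqP ->; rewrite eqxx ?orbT.
- by exists c, a, b; split => // w; rewrite !inE => /or3P [] /eqP ->; rewrite eqxx ?orbT.
- by exists b, a, c; split => // w; rewrite !inE => /or3P [] /eqP ->; rewrite eqxx ?orbT.
- by exists b, c, a; split => // w; rewrite !inE => /or3P [] /eqP ->; rewrite eqxx ?orbT.
- by exists c, b, a; split => // w; rewrite !inE => /or3P [] /eqP ->; rewrite eqxx ?orbT.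
Qed.

Definition Dtr := [set t : 'I_n * ('I_n * 'I_n) |
  [&& (t.2.2 < t.1)%N, (t.1 < t.2.1)%N & circb [set t.1; t.2.1; t.2.2]]].
Definition ftr (t : 'I_n * ('I_n * 'I_n)) : {set 'I_n} := [set t.1; t.2.1; t.2.2].

Lemma ord_neq (a b : 'I_n) : (a < b)%N -> a != b.
Proof. by move=> h; apply/eqP => e; move: h; rewrite e ltnn. Qed.

Lemma LS_im : LS = ftr @: Dtr.
Proof.
apply/setP => A; rewrite !inE; apply/idP/imsetP.
  move=> /andP [/eqP h3 hc].
  have [a [b [c [hab hac hbc eA]]]] := card3_ex h3.
  have [lo [mid [hi [h1 h2 hs]]]] := sort3 hab hac hbc.
  have inA : forall w, w \in [:: lo; mid; hi] -> w \in A.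
    move=> w /hs; rewrite eA set3E !inE; by rewrite orbA.
  have eA' : A = [set mid; hi; lo].
    apply: set3_sub => //; try (apply: inA; by rewrite !inE eqxx ?orbT).
    - exact: ord_neq.
    - by rewrite eq_sym ord_neq.
    - by rewrite eq_sym ord_neq // (ltn_trans h1 h2).
  exists (mid, (hi, lo)) => //.
  by rewrite inE /= h1 h2 -eA' hc.
move=> [[j [x y]]] ; rewrite inE /= => /and3P [h1 h2 hc] ->.
rewrite /ftr /= hc andbT card3 //.
- by rewrite ord_neq.
- by rewrite eq_sym ord_neq.
- by rewrite eq_sym ord_neq // (ltn_trans h1 h2).
Qed.

Lemma ftr_inj : {in Dtr &, injective ftr}.
Proof.
move=> [j [x y]] [j' [x' y']]; rewrite !inE /= => /and3P [h1 h2 _] /and3P [h1' h2' _].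
rewrite /ftr /= => e.
have m : forall w, w \in [set j; x; y] -> w \in [set j'; x'; y'] by move=> w; rewrite e.
have m' : forall w, w \in [set j'; x'; y'] -> w \in [set j; x; y] by move=> w; rewrite e.
have ex : (x : nat) = x'.
  have := m x; rewrite set3E eqxx orbT => /(_ isT) /mem3 [] ?;
  have := m' x'; rewrite set3E eqxx orbT => /(_ isT) /mem3 [] ?; lia.
have ey : (y : nat) = y'.
  have := m y; rewrite set3E eqxx !orbT => /(_ isT) /mem3 [] ?;
  have := m' y'; rewrite set3E eqxx !orbT => /(_ isT) /mem3 [] ?; lia.
have ej : (j : nat) = j'.
  have := m j; rewrite set3E eqxx /= => /(_ isT) /mem3 [] ?; lia.
by rewrite (ord_inj ex) (ord_inj ey) (ord_inj ej).
Qed.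

Lemma card_LS : #|LS| = (n - 2)%N.
Proof.
rewrite LS_im (card_in_imset ftr_inj) -sum_Vj.
have -> : #|Dtr| = (\sum_t ((t \in Dtr) : nat))%N by rewrite (sumb_card (fun t => t \in Dtr)); apply: eq_card.
rewrite [RHS](eq_bigr (fun j : 'I_n => \sum_(xy : 'I_n * 'I_n)
   ((j < xy.1)%N && (xy.2 < j)%N && circb [set j; xy.1; xy.2]))%N); last first.
  by move=> j _; rewrite /Vj pair_bigA.
rewrite [RHS]pair_bigA; apply: eq_bigr => [[j [x y]]] _ /=.
by rewrite inE /= andbA [(y < j)%N && _]andbC.
Qed.

Definition eA (A : {set 'I_n}) := #|[set i | (i \in A) && (succ_ord i \in A)]|.

Lemma sum_e : (\sum_(A in LS) eA A)%N = n.
Proof.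
rewrite (eq_bigr (fun A : {set 'I_n} => \sum_(i : 'I_n) ((i \in A) && (succ_ord i \in A) : nat))%N); last first.
  move=> A _; rewrite /eA (sumb_card (fun i => (i \in A) && (succ_ord i \in A))).
  by apply: eq_card => i; rewrite inE.
rewrite exchange_big /= (eq_bigr (fun _ => 1%N)); last first.
  by move=> i _; rewrite sum_in_card edge_count.
by rewrite sum_nat_const card_ord muln1.
Qed.

Lemma val_iter k (a : 'I_n) : nat_of_ord (iter k (@succ_ord n) a) = ((a + k) %% n)%N.
Proof.
elim: k => [|k IH] /=; first by rewrite addn0 modn_small.
by rewrite IH -[((a + k) %% n).+1]addn1 modnDml addn1 addnS.
Qed.

Lemma iter_neq k l (a : 'I_n) : (k < l)%N -> (l < n)%N ->
  iter k (@succ_ord n) a != iter l (@succ_ord n) a.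
Proof.
move=> hkl hl; apply/eqP => e; move: (congr1 (@nat_of_ord _) e).
rewrite !val_iter => /eqP; rewrite eqn_modDl !modn_small; lia.
Qed.

Lemma succ_inj : injective (@succ_ord n).
Proof.
move=> x y e; move: (congr1 (@nat_of_ord _) e); rewrite !val_succ.
have hx := ltn_ord x; have hy := ltn_ord y.
by case: (ltnP x.+1 n) => h1; case: (ltnP y.+1 n) => h2 /= h; apply: ord_inj; lia.
Qed.

Lemma succ_neq2 (i : 'I_n) : succ_ord (succ_ord i) != i.
Proof. by rewrite eq_sym; apply: (@iter_neq 0%N 2%N i); lia. Qed.

Section Four.
Hypothesis hn4 : (4 <= n)%N.

Lemma e_le2 (A : {set 'I_n}) : #|A| = 3%N -> (eA A <= 2)%N.
Proof.
move=> h3.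
have hsub : [set i | (i \in A) && (succ_ord i \in A)] \subset A.
  by apply/subsetP => i; rewrite inE => /andP [].
rewrite leqNgt; apply/negP => hgt.
have hE : [set i | (i \in A) && (succ_ord i \in A)] = A.
  apply/eqP; rewrite eqEcard hsub h3 /=; by rewrite /eA in hgt.
have hs : forall i, i \in A -> succ_ord i \in A.
  by move=> i hi; move: hi; rewrite -{1}hE inE => /andP [].
have [a ha] : exists a, a \in A by apply/card_gt0P; rewrite h3.
have h1 := hs _ ha; have h2 := hs _ h1; have h3' := hs _ h2.
have := card4 ha h1 h2 h3' (@iter_neq 0%N 1%N a ltac:(lia) ltac:(lia)) (@iter_neq 0%N 2%N a ltac:(lia) ltac:(lia)) (@iter_neq 0%N 3%N a ltac:(lia) ltac:(lia))
  (@iter_neq 1%N 2%N a ltac:(lia) ltac:(lia)) (@iter_neq 1%N 3%N a ltac:(lia) ltac:(lia)) (@iter_neq 2%N 3%N a ltac:(lia) ltac:(lia)).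
by rewrite h3.
Qed.


Lemma nb_set (i : 'I_n) : [set j : 'I_n | (j : nat) \in [:: (i : nat); (i.+1 %% n)%N; (i.+2 %% n)%N]]
  = [set i; succ_ord i; succ_ord (succ_ord i)].
Proof.
have e2 : nat_of_ord (succ_ord (succ_ord i)) = (i.+2 %% n)%N.
  by rewrite (val_iter 2 i) addn2.
apply/setP => j; rewrite inE set3E !inE -e2.
by [].
Qed.

Lemma nb_e (A : {set 'I_n}) : #|A| = 3%N -> neighboring A = (eA A == 2%N).
Proof.
move=> h3; apply/idP/idP.
  case/existsP => i /eqP; rewrite nb_set => eA'.
  rewrite eqn_leq e_le2 //=.
  have hi2 : i != succ_ord i by rewrite eq_sym succ_neq.
  have c2 : #|[set i; succ_ord i]| = 2%N by rewrite cards2 hi2.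
  rewrite -c2 /eA; apply: subset_leq_card.
  apply/subsetP => x; rewrite !inE eA' !set3E => /orP [] /eqP ->; by rewrite !eqxx ?orbT.
move/eqP => he.
have [u [v [huv hE]]] : exists u v, u != v /\ [set i | (i \in A) && (succ_ord i \in A)] = [set u; v].
  by apply/cards2P; rewrite -/(eA A) he.
have : u \in [set i | (i \in A) && (succ_ord i \in A)] by rewrite hE !inE eqxx.
rewrite inE => /andP [hu hsu].
have : v \in [set i | (i \in A) && (succ_ord i \in A)] by rewrite hE !inE eqxx orbT.
rewrite inE => /andP [hv hsv].
have hnb : forall w, w \in A -> succ_ord w \in A -> succ_ord (succ_ord w) \in A -> neighboring A.
  move=> w h1 h2 h3'; apply/existsP; exists w; rewrite nb_set; apply/eqP.
  by apply: set3_sub; rewrite // ?succ_neq2 // eq_sym ?succ_neq ?succ_neq2.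
have [e1 | ne1] := eqVneq (succ_ord u) v.
  by apply: (hnb u) => //; rewrite e1.
have [e2 | ne2] := eqVneq (succ_ord v) u.
  by apply: (hnb v) => //; rewrite e2.
have hsuv : succ_ord u != succ_ord v by apply: contra huv => /eqP /succ_inj ->.
have := card4 hu hsu hv hsv; rewrite h3.
by rewrite eq_sym succ_neq huv eq_sym ne2 ne1 hsuv eq_sym succ_neq => /(_ isT isT isT isT isT isT).
Qed.

Lemma dj_e (A : {set 'I_n}) : #|A| = 3%N -> disjoint3 A = (eA A == 0%N).
Proof.
move=> h3; rewrite /eA cards_eq0; apply/idP/idP.
  move=> hd; apply/eqP/setP => i; rewrite !inE; apply/negP => /andP [hi hsi].
  move/forallP: hd => /(_ i); rewrite hi /= => /forallP /(_ (succ_ord i)); rewrite hsi /=.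
  by rewrite /adjacent /nxt /= eqxx.
move=> /eqP he; apply/forallP => i; apply/implyP => hi; apply/forallP => j; apply/implyP => hj.
apply/negP; rewrite /adjacent /nxt => /orP [] /eqP e.
  have ej : j = succ_ord i by apply: ord_inj.
  have : i \in [set i | (i \in A) && (succ_ord i \in A)] by rewrite inE hi -ej hj.
  by rewrite he inE.
have ei : i = succ_ord j by apply: ord_inj.
have : j \in [set i | (i \in A) && (succ_ord i \in A)] by rewrite inE hj -ei hi.
by rewrite he inE.
Qed.

Lemma gen_main :
  let c K := #|[set A : {set 'I_n} | [&& #|A| == 3%N, K A & circb A]]| in
  ((c (@neighboring n) : int) - (c (@disjoint3 n) : int) = 2)%R /\
  (c (@neighboring n) + c (@disjoint3 n) + c (@intermediate n) = n - 2)%N.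
Proof.
move=> c.
have cE : forall K : {set 'I_n} -> bool, c K = (\sum_(A in LS) (K A : nat))%N.
  move=> K; rewrite sum_in_card /c; apply: eq_card => A; rewrite !inE.
  by case: (K A); rewrite ?andbT ?andbF.
have pt : forall A, A \in LS ->
   ((neighboring A : nat) + disjoint3 A + intermediate A = 1)%N /\
   (2 * (neighboring A : nat) + intermediate A = eA A)%N.
  move=> A; rewrite inE => /andP [/eqP h3 _].
  rewrite /intermediate nb_e // dj_e //.
  have := e_le2 h3; case: (eA A) => [|[|[|k]]] //=.
have h1 : (c (@neighboring n) + c (@disjoint3 n) + c (@intermediate n) = n - 2)%N.
  rewrite !cE -!big_split /=; transitivity #|LS|; last exact: card_LS.
  rewrite -sum1_card; apply: eq_bigr => A hA.
  by case: (pt A hA).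
have h2 : (2 * c (@neighboring n) + c (@intermediate n) = n)%N.
  rewrite !cE; transitivity (\sum_(A in LS) eA A)%N; last exact: sum_e.
  rewrite big_distrr /= -big_split /=; apply: eq_bigr => A hA.
  by case: (pt A hA).
split => //.
have -> : c (@neighboring n) = (c (@disjoint3 n) + 2)%N by lia.
by rewrite PoszD addrAC subrr add0r.
Qed.

End Four.
End Poly.

Section Final.
Variables (R : realFieldType) (n : nat) (p : 'I_n -> pt R).

Definition sq (i : 'I_n) : R := (p i).1 ^+ 2 + (p i).2 ^+ 2.

Lemma d2_aff (x c : pt R) (r : R) :
  d2 x c - r = x.1 ^+ 2 + x.2 ^+ 2 - aff (2 * c.1) (2 * c.2) (r - c.1 ^+ 2 - c.2 ^+ 2) x.
Proof. by rewrite /d2 /aff; ring. Qed.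

Lemma d2_aff' (x : pt R) (al be ga : R) :
  d2 x (al / 2, be / 2) - (ga + (al / 2) ^+ 2 + (be / 2) ^+ 2) =
  x.1 ^+ 2 + x.2 ^+ 2 - aff al be ga x.
Proof. by rewrite /d2 /aff /=; field. Qed.

Lemma aff_opp al be ga (x : pt R) : aff (- al) (- be) (- ga) x = - aff al be ga x.
Proof. by rewrite /aff; ring. Qed.

Lemma full_circ (A : {set 'I_n}) : full_circle p A <-> circ p sq A.
Proof.
split.
  move=> [c [r [hA hN]]].
  exists (2 * c.1), (2 * c.2), (r - c.1 ^+ 2 - c.2 ^+ 2); split.
    move=> i hi; have := d2_aff (p i) c r; rewrite (hA i hi) /sq; lra.
  move=> j hj; have := d2_aff (p j) c r; have := hN j hj; rewrite /sq; lra.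
move=> [al [be [ga [hA hN]]]].
exists (al / 2, be / 2), (ga + (al / 2) ^+ 2 + (be / 2) ^+ 2); split.
  move=> i hi; have := d2_aff' (p i) al be ga; have := hA i hi; rewrite /sq; lra.
move=> j hj; have := d2_aff' (p j) al be ga; have := hN j hj; rewrite /sq; lra.
Qed.

Lemma empty_circ (A : {set 'I_n}) : empty_circle p A <-> circ p (fun i => - sq i) A.
Proof.
split.
  move=> [c [r [hA hN]]].
  exists (- (2 * c.1)), (- (2 * c.2)), (- (r - c.1 ^+ 2 - c.2 ^+ 2)); split.
    move=> i hi; rewrite aff_opp; have := d2_aff (p i) c r; rewrite (hA i hi) /sq; lra.
  move=> j hj; rewrite aff_opp; have := d2_aff (p j) c r; have := hN j hj; rewrite /sq; lra.
move=> [al [be [ga [hA hN]]]].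
exists (- al / 2, - be / 2), (- ga + (- al / 2) ^+ 2 + (- be / 2) ^+ 2); split.
  move=> i hi; have := d2_aff' (p i) (- al) (- be) (- ga); rewrite aff_opp.
  have := hA i hi; rewrite /sq; lra.
move=> j hj; have := d2_aff' (p j) (- al) (- be) (- ga); rewrite aff_opp.
have := hN j hj; rewrite /sq; lra.
Qed.

Variable eps : R.
Hypothesis heps : eps = 1 \/ eps = -1.
Hypothesis hn : (2 < n)%N.
Hypothesis hconv : forall i w : 'I_n, w != i -> w != succ_ord i ->
  0 < Dl p eps i (succ_ord i) w.
Hypothesis hnf : no_four_concyclic p.

Lemma Wz_opp z a b c v : Wz p eps (fun i => - z i) a b c v = - Wz p eps z a b c v.
Proof. by rewrite /Wz /Wf; ring. Qed.

Lemma gen_sq : forall a b c v : 'I_n, a != b -> a != c -> a != v ->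
  b != c -> b != v -> c != v -> Wz p eps sq a b c v != 0.
Proof.
move=> a b c v hab hac hav hbc hbv hcv; apply/negP => /eqP hW.
have hD : Dl p eps a b c != 0 by apply: Dl_neq0.
have [al [be [ga [ha hb hc]]]] := interp (sq a) (sq b) (sq c) (Dl_orient hD).
have hv : aff al be ga (p v) = sq v.
  move: hW; rewrite (Wz_aff eps v ha hb hc) => /eqP; rewrite mulf_eq0 oppr_eq0 (negbTE hD) /=.
  by rewrite subr_eq0 => /eqP ->.
apply: (hnf (A := v |: [set a; b; c]) (c := (al / 2, be / 2))
   (r := ga + (al / 2) ^+ 2 + (be / 2) ^+ 2)).
  by rewrite cardsU1 card3 // set3E !(eq_sym v) (negbTE hav) (negbTE hbv) (negbTE hcv).
move=> i; rewrite !inE -orbA.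
have key : forall k, aff al be ga (p k) = sq k -> d2 (p k) (al / 2, be / 2) = ga + (al / 2) ^+ 2 + (be / 2) ^+ 2.
  move=> k hk; have := d2_aff' (p k) al be ga; rewrite hk /sq; lra.
by case/or4P => /eqP ->; apply: key.
Qed.

Lemma gen_msq : forall a b c v : 'I_n, a != b -> a != c -> a != v ->
  b != c -> b != v -> c != v -> Wz p eps (fun i => - sq i) a b c v != 0.
Proof. by move=> *; rewrite Wz_opp oppr_eq0; apply: gen_sq. Qed.

End Final.

Theorem mainTheorem1 (R : realFieldType) (n : nat) (p : 'I_n -> pt R) :
  (4 <= n)%N -> convex_polygon p -> no_four_concyclic p ->
  let sp := count_full p (@neighboring n) in
  let tp := count_full p (@disjoint3 n) in
  let up := count_full p (@intermediate n) in
  let sm := count_empty p (@neighboring n) in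
  let tm := count_empty p (@disjoint3 n) in
  let um := count_empty p (@intermediate n) in
  [/\ (sp : int) - (tp : int) = 2, (sm : int) - (tm : int) = 2,
      (sp + tp + up = n - 2)%N & (sm + tm + um = n - 2)%N].
Proof.
move=> hn4 hconv hnf sp tp up sm tm um.
have hn : (2 < n)%N by lia.
have [eps [heps hc]] : exists eps : R, (eps = 1 \/ eps = -1) /\
    forall i w : 'I_n, w != i -> w != succ_ord i -> 0 < Dl p eps i (succ_ord i) w.
  case: hconv => h.
    exists 1; split; first by left.
    by move=> i w h1 h2; rewrite /Dl mul1r; apply: h.
  exists (-1); split; first by right.
  by move=> i w h1 h2; rewrite /Dl mulN1r oppr_gt0; apply: h.
have cf : forall K, count_full p K = #|[set A : {set 'I_n} | [&& #|A| == 3%N, K A & circb p (sq p) A]]|.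
  move=> K; apply: eq_card => A; rewrite !inE; congr [&& _, _ & _].
  by apply/idP/idP => /asboolP h; apply/asboolP; apply/full_circ.
have ce : forall K, count_empty p K = #|[set A : {set 'I_n} | [&& #|A| == 3%N, K A & circb p (fun i => - sq p i) A]]|.
  move=> K; apply: eq_card => A; rewrite !inE; congr [&& _, _ & _].
  by apply/idP/idP => /asboolP h; apply/asboolP; apply/empty_circ.
have g1 : forall a b c v : 'I_n, a != b -> a != c -> a != v ->
  b != c -> b != v -> c != v -> Wz p eps (sq p) a b c v != 0.
  by move=> a b c v; apply: gen_sq.
have g2 : forall a b c v : 'I_n, a != b -> a != c -> a != v ->
  b != c -> b != v -> c != v -> Wz p eps (fun i => - sq p i) a b c v != 0.
  by move=> a b c v; apply: gen_msq.
have [f1 f2] := gen_main heps hn hc g1 hn4.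
have [e1 e2] := gen_main heps hn hc g2 hn4.
by split; rewrite /sp /tp /up /sm /tm /um ?cf ?ce.
Qed.
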